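(* Let $S^{\max}$, $L$ and $\mathcal{I}$ be as in the context. For all $\sigma,\sigma'\in\mathbb{T}$ with $\sigma\preceq\sigma'$, we have $\mathcal{I}(\sigma)\supseteq\mathcal{I}(\sigma')$.
   Context: Let $E$ be a set of events. A trace is a finite sequence $\sigma=\sigma_0\cdots\sigma_{n-1}$ ($n\ge 0$) or an infinite sequence $\sigma_0\sigma_1\cdots$ of events; $|\sigma|$ is its length ($\infty$ if infinite) and $\mathbb{T}$ is the set of all traces (including the empty trace). Write $\sigma\preceq\sigma'$ iff $|\sigma|\le|\sigma'|$ and $\sigma_i=\sigma'_i$ for all $0\le i<|\sigma|$ (prefix order). For $P\subseteq\mathbb{T}$, $\mathrm{pf}(P)=\{\sigma'\in\mathbb{T}\mid\exists\sigma\in P.\ \sigma'\preceq\sigma\}$. Fix $S^{\max}\subseteq\mathbb{T}$ and let $S^{\mathrm{pf}}=\mathrm{pf}(S^{\max})$ (valid traces). For $P\subseteq\mathbb{T}$, $\alpha(P)=\{\sigma\in\mathrm{pf}(P)\mid\forall\sigma'\in S^{\max}.\ \sigma\preceq\sigma'\Rightarrow\sigma'\in P\}$. Let $L\subseteq\wp(S^{\max})$ with $S^{\max},\emptyset\in L$ be such that $(L,\subseteq)$ is a complete lattice with top $S^{\max}$, bottom $\emptyset$, join $\sqcup$ and meet $\sqcap$ (least upper bounds / greatest lower bounds in $L$ w.r.t. $\subseteq$, not necessarily $\cup,\cap$). The inquiry function is $\mathcal{I}(\sigma)=\sqcap\{P\in L\mid \sigma\in\alpha(P)\}$ for $\sigma\in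 S^{\mathrm{pf}}$, and $\mathcal{I}(\sigma)=\emptyset$ for $\sigma\notin S^{\mathrm{pf}}$. *)

(* Defs.v *)
Set Implicit Arguments.

(* A trace over events E: a sequence nat -> option E that is "None-closed
   upwards": once it stops (None), it stays stopped. Finite traces of length n
   have Some at positions < n and None from n on; infinite traces are Some
   everywhere; the empty trace is constantly None. *)
Definition is_trace (E : Type) (s : nat -> option E) : Prop :=
  forall n, s n = None -> s (S n) = None.

Definition trace (E : Type) := { s : nat -> option E | is_trace s }.

Definition at_ (E : Type) (s : trace E) (n : nat) : option E := proj1_sig s n.

Definition tset (E : Type) := trace E -> Prop.

Definition subset (E : Type) (P Q : tset E) : Prop := forall s, P s -> Q s.

(* Prefix order: |s| <= |s'| and s_i = s'_i for i < |s|.  With the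
   representation above this says: every defined position of s is defined in
   s' with the same event. *)
Definition prefix (E : Type) (s s' : trace E) : Prop :=
  forall i, at_ s i = None \/ at_ s' i = at_ s i.

Definition pf (E : Type) (P : tset E) : tset E :=
  fun s' => exists s, P s /\ prefix s' s.

Definition alpha (E : Type) (Smax P : tset E) : tset E :=
  fun s => pf P s /\ (forall s', Smax s' -> prefix s s' -> P s').

Definition is_glb (E : Type) (L : tset E -> Prop) (F : tset E -> Prop)
  (m : tset E) : Prop :=
  L m /\ (forall P, F P -> subset m P) /\
  (forall Q, L Q -> (forall P, F P -> subset Q P) -> subset Q m).

Definition is_lub (E : Type) (L : tset E -> Prop) (F : tset E -> Prop)
  (j : tset E) : Prop :=
  L j /\ (forall P, F P -> subset P j) /\
  (forall Q, L Q -> (forall P, F P -> subset P Q) -> subset j Q).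

Definition complete_lattice (E : Type) (L : tset E -> Prop) : Prop :=
  forall F, (forall P, F P -> L P) ->
    (exists m, is_glb L F m) /\ (exists j, is_lub L F j).

Definition inquiry (E : Type) (Smax : tset E) (L : tset E -> Prop)
  (meet : (tset E -> Prop) -> tset E) (s : trace E) : tset E :=
  fun t => pf Smax s /\ meet (fun P => L P /\ alpha Smax P s) t.

(* Main.v *)
Require Import Defs.

Lemma prefix_trans {E : Type} {a b c : trace E} :
  prefix a b -> prefix b c -> prefix a c.
Proof.
  intros H1 H2 i. destruct (H1 i) as [H|H]; [left; exact H|].
  destruct (H2 i) as [H'|H'].
  - left. rewrite <- H. exact H'.
  - right. rewrite H'. exact H.
Qed.

Theorem lemma2 (E : Type) (Smax : tset E) (L : tset E -> Prop)
  (meet : (tset E -> Prop) -> tset E)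
  (HLsub : forall P, L P -> subset P Smax)
  (HLtop : L Smax)
  (HLbot : L (fun _ => False))
  (HLcl : complete_lattice L)
  (Hmeet : forall F, (forall P, F P -> L P) -> is_glb L F (meet F)) :
  forall s s' : trace E, prefix s s' ->
    subset (inquiry Smax L meet s') (inquiry Smax L meet s).
Proof.
  intros s s' Hp t [[x [Hx Hpx]] Ht].
  split.
  - exists x. split; [exact Hx| exact (prefix_trans Hp Hpx)].
  - set (F := fun P => L P /\ alpha Smax P s).
    set (F' := fun P => L P /\ alpha Smax P s').
    assert (HF : forall P, F P -> F' P).
    { intros P [HL [_ Hall]]. split; [exact HL|]. split.
      - exists x. split; [apply Hall; [exact Hx| exact (prefix_trans Hp Hpx)] | exact Hpx].
      - intros y Hy Hpy. apply Hall; [exact Hy| exact (prefix_trans Hp Hpy)]. }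
    destruct (Hmeet F (fun P HP => proj1 HP)) as [_ [_ Hg]].
    destruct (Hmeet F' (fun P HP => proj1 HP)) as [HL' [Hlb' _]].
    apply (Hg (meet F')); [exact HL'| |exact Ht].
    intros P HP. apply Hlb'. apply HF. exact HP.
Qed.
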